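(* Let $E$ be a countable directed graph which is row-finite and has no sources, let $G$ be a discrete group acting on $E$ by graph automorphisms, and let $\varphi:G\times E^1\to G$ be a 1-cocycle with $\varphi(g,a)\cdot x=g\cdot x$ for all $g,a,x$. Then every tight filter in the semilattice of idempotents $E(\mathcal{S}_{G,E})$ is an ultrafilter; that is, the tight spectrum $\widehat E_{\mathrm{tight}}(\mathcal{S}_{G,E})$ coincides with the space $\widehat E_\infty(\mathcal{S}_{G,E})$ of ultrafilters (which is homeomorphic to $E^\infty$ via $\omega\mapsto\{(\omega|_n,1,\omega|_n):n\in\mathbb{N}\}$).
   Context: Conventions: paths $\alpha=\alpha_1\cdots\alpha_n$ with $s(\alpha_i)=r(\alpha_{i+1})$, $r(\alpha)=r(\alpha_1)$, $s(\alpha)=s(\alpha_n)$; vertices are paths of length 0; $E^*$ finite paths, $E^\infty$ infinite paths $\omega=\omega_1\omega_2\cdots$, $\omega|_n=\omega_1\cdots\omega_n$. Row-finite without sources: $0<|r^{-1}(x)|<\infty$ for every vertex $x$. 1-cocycle: $\varphi(gh,a)=\varphi(g,ha)\varphi(h,a)$; action and cocycle extend to paths by $g(a\alpha')=(ga)(\varphi(g,a)\alpha')$, $\varphi(g,a\alpha')=\varphi(\varphi(g,a),\alpha')$, $\varphi(g,x)=g$ for vertices. $\mathcal{S}_{G,E}=\{(\alpha,g,\beta):\alpha,\beta\in E^*,\ g\in G,\ s(\alpha)=g\,s(\beta)\}\cup\{0\}$, with $(\alpha,g,\beta)(\gamma,h,\delta)$ equal to $(\alpha,g\varphi(h,\varepsilon),\delta(h^{-1}\varepsilon))$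 if $\beta=\gamma\varepsilon$, to $(\alpha(g\varepsilon),\varphi(g,\varepsilon)h,\delta)$ if $\gamma=\beta\varepsilon$, and $0$ otherwise; $(\alpha,g,\beta)^*=(\beta,g^{-1},\alpha)$. Its nonzero idempotents are $(\alpha,1,\alpha)$, $\alpha\in E^*$, with $(\alpha,1,\alpha)\le(\beta,1,\beta)$ iff $\beta$ is a prefix of $\alpha$. A filter is a nonempty subset $\xi\subseteq E(\mathcal{S}_{G,E})$ not containing $0$, closed under products and upward closed; an ultrafilter is a maximal filter. For finite $X,Y\subseteq E(S)$, $E(S)^{X,Y}=\{e: e\le x\ \forall x\in X,\ ey=0\ \forall y\in Y\}$; a finite $Z\subseteq E(S)^{X,Y}$ is a cover if every nonzero element of $E(S)^{X,Y}$ has nonzero product with some $z\in Z$. A filter $\xi$ is tight if whenever $X,Y$ are finite with $X\subseteq\xi$ and $Y\cap\xi=\emptyset$, every finite cover $Z$ of $E(S)^{X,Y}$ satisfies $Z\cap\xi\ne\emptyset$. *)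

(* Defs.v *)
From mathcomp Require Import all_boot.
From Stdlib Require List.

Record group := Group {
  gcar :> Type;
  gmul : gcar -> gcar -> gcar;
  gone : gcar;
  ginv : gcar -> gcar;
  gmulA : forall x y z, gmul x (gmul y z) = gmul (gmul x y) z;
  gmul1 : forall x, gmul gone x = x;
  gmulV : forall x, gmul (ginv x) x = gone }.

Arguments gmul {_} _ _.

Record ssdata := SSData {
  V : countType;
  Ed : countType;
  rng : Ed -> V;
  src : Ed -> V;
  grp : group;
  actV : grp -> V -> V;
  actE : grp -> Ed -> Ed;
  phi : grp -> Ed -> grp }.

Section SelfSimilar.
Variable D : ssdata.
Local Notation G := (grp D).
Local Notation r := (rng D).
Local Notation s := (src D).
Local Notation "g * h" := (gmul g h).

Definition row_finite_no_sources : Prop :=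
  forall x : V D, exists l : seq (Ed D),
    l != [::] /\ forall a, (r a == x) = (a \in l).

Definition graph_action : Prop :=
  [/\ (forall x, actV D (gone G) x = x),
      (forall g h : G, forall x, actV D (g * h) x = actV D g (actV D h x)),
      (forall a, actE D (gone G) a = a) &
      (forall g h : G, forall a, actE D (g * h) a = actE D g (actE D h a))] /\
  (forall (g : G) a, r (actE D g a) = actV D g (r a)) /\
  (forall (g : G) a, s (actE D g a) = actV D g (s a)).

Definition one_cocycle : Prop :=
  forall g h : G, forall a, phi D (g * h) a = phi D g (actE D h a) * phi D h a.

Definition cocycle_fixes_vertices : Prop :=
  forall g a x, actV D (phi D g a) x = actV D g x.

(* A finite path is a pair (x, l) where l = a_1 ... a_n is a
   sequence of edges with s(a_i) = r(a_{i+1}) and, if n > 0, r(a_1) = x.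
   Paths of length 0 are the vertices (x, [::]).  r(x, l) = x. *)
Definition fpath := (V D * seq (Ed D))%type.

Fixpoint chain (l : seq (Ed D)) : bool :=
  if l is a :: l' then
    (if l' is b :: _ then s a == r b else true) && chain l'
  else true.

Definition is_path (p : fpath) : bool :=
  (if p.2 is a :: _ then r a == p.1 else true) && chain p.2.

Definition psrc (p : fpath) : V D :=
  if p.2 is a :: l then s (last a l) else p.1.

Definition pcat (p q : fpath) : fpath := (p.1, p.2 ++ q.2).

Definition pprefix (p q : fpath) : bool := (p.1 == q.1) && prefix p.2 q.2.

Definition prest (p q : fpath) : fpath := (psrc p, drop (size p.2) q.2).

Fixpoint act_seq (g : G) (l : seq (Ed D)) : seq (Ed D) :=
  if l is a :: l' then actE D g a :: act_seq (phi D g a) l' else [::].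

Fixpoint phi_seq (g : G) (l : seq (Ed D)) : G :=
  if l is a :: l' then phi_seq (phi D g a) l' else g.

Definition act_path (g : G) (p : fpath) : fpath := (actV D g p.1, act_seq g p.2).
Definition phi_path (g : G) (p : fpath) : G := phi_seq g p.2.

(* Elements of S_{G,E}: None is 0, Some (alpha, g, beta) is (alpha, g, beta). *)
Definition Sraw := option (fpath * G * fpath).

Definition inS (x : Sraw) : Prop :=
  match x with
  | None => True
  | Some (al, g, be) => is_path al /\ is_path be /\ psrc al = actV D g (psrc be)
  end.

Definition Smul (x y : Sraw) : Sraw :=
  match x, y with
  | Some (al, g, be), Some (ga, h, de) =>
      if pprefix ga be then
        let eps := prest ga be in
        Some (al, g * phi_path h eps, pcat de (act_path (ginv G h) eps))
      else if pprefix be ga then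
        let eps := prest be ga in
        Some (pcat al (act_path g eps), phi_path g eps * h, de)
      else None
  | _, _ => None
  end.

Definition Sstar (x : Sraw) : Sraw :=
  match x with
  | Some (al, g, be) => Some (be, ginv G g, al)
  | None => None
  end.

Definition idem (e : Sraw) : Prop := inS e /\ Smul e e = e.
Definition Sle (e f : Sraw) : Prop := e = Smul e f.

Definition is_filter (xi : Sraw -> Prop) : Prop :=
  [/\ (forall e, xi e -> idem e),
      (exists e, xi e),
      ~ xi None,
      (forall e f, xi e -> xi f -> xi (Smul e f)) &
      (forall e f, xi e -> idem f -> Sle e f -> xi f)].

Definition is_ultrafilter (xi : Sraw -> Prop) : Prop :=
  is_filter xi /\
  forall eta, is_filter eta -> (forall e, xi e -> eta e) -> forall e, eta e -> xi e.

Definition EXY (X Y : seq Sraw) (e : Sraw) : Prop :=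
  idem e /\ (forall x, List.In x X -> Sle e x) /\
  (forall y, List.In y Y -> Smul e y = None).

Definition is_cover (X Y Z : seq Sraw) : Prop :=
  (forall z, List.In z Z -> EXY X Y z) /\
  forall e, EXY X Y e -> e <> None -> exists z, List.In z Z /\ Smul e z <> None.

Definition is_tight (xi : Sraw -> Prop) : Prop :=
  is_filter xi /\
  forall X Y : seq Sraw,
    (forall x, List.In x X -> xi x) ->
    (forall y, List.In y Y -> idem y /\ ~ xi y) ->
    forall Z, is_cover X Y Z -> exists z, List.In z Z /\ xi z.

End SelfSimilar.

(* Main.v *)
Require Import Defs.
From mathcomp Require Import all_boot.
From Stdlib Require Import Classical.
Set Implicit Arguments. Unset Strict Implicit.

Lemma g_idem (G : group) (x : G) : gmul x x = x -> x = gone G.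
Proof.
move=> H. have := gmulV G x. rewrite -{2}H gmulA gmulV gmul1. by [].
Qed.

Lemma gVr (G : group) (x : G) : gmul x (ginv G x) = gone G.
Proof.
apply: g_idem. rewrite -gmulA (gmulA G (ginv G x) x) gmulV gmul1. by [].
Qed.

Lemma g1r (G : group) (x : G) : gmul x (gone G) = x.
Proof. by rewrite -(gmulV G x) gmulA gVr gmul1. Qed.

Lemma ginv1 (G : group) : ginv G (gone G) = gone G.
Proof. by rewrite -{1}(@g1r G (ginv G (gone G))) gmulV. Qed.

Definition ee (D : ssdata) (a : Defs.fpath D) : Sraw D := Some (a, gone (grp D), a).
Arguments ee {D}.

Lemma phi1 (D : ssdata) : graph_action D -> one_cocycle D ->
  forall a, phi D (gone (grp D)) a = gone (grp D).
Proof.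
move=> [[_ _ HE1 _] _] Hc a. apply: g_idem.
have := Hc (gone _) (gone _) a. rewrite gmul1 HE1. by move=> <-.
Qed.

Lemma act_seq1 (D : ssdata) : graph_action D -> one_cocycle D ->
  forall l, act_seq D (gone (grp D)) l = l.
Proof.
move=> Ha Hc; elim=> [|a l IH] //=. rewrite phi1 // IH.
by case: Ha => [[_ _ -> _] _].
Qed.

Lemma phi_seq1 (D : ssdata) : graph_action D -> one_cocycle D ->
  forall l, phi_seq D (gone (grp D)) l = gone (grp D).
Proof. move=> Ha Hc; elim=> [|a l IH] //=. by rewrite phi1. Qed.

Lemma size_act_seq (D : ssdata) g l : size (act_seq D g l) = size l.
Proof. by elim: l g => [|a l IH] g //=; rewrite IH. Qed.

Lemma pprefix_cat (D : ssdata) (b a : Defs.fpath D) : pprefix D b a ->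
  (b.1, b.2 ++ drop (size b.2) a.2) = a.
Proof.
case: a b => [x l] [y m] /andP[/= /eqP -> /prefixP [l' ->]].
by rewrite drop_size_cat.
Qed.

Lemma Smul_ee (D : ssdata) : graph_action D -> one_cocycle D ->
  forall a b : Defs.fpath D, Smul D (ee a) (ee b) =
    if pprefix D b a then ee a else if pprefix D a b then ee b else None.
Proof.
move=> Ha Hc a b. rewrite /Smul /ee /prest /pcat /act_path /phi_path /=.
case: ifP => Hba.
  by rewrite ginv1 act_seq1 // phi_seq1 // gmul1 pprefix_cat.
case: ifP => Hab //.
by rewrite act_seq1 // phi_seq1 // gmul1 pprefix_cat.
Qed.

Lemma pprefix_refl (D : ssdata) (a : Defs.fpath D) : pprefix D a a.
Proof. by rewrite /pprefix eqxx prefix_refl. Qed.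

Lemma pprefix_trans (D : ssdata) (a b c : Defs.fpath D) :
  pprefix D a b -> pprefix D b c -> pprefix D a c.
Proof.
case: a b c => [x l] [y m] [z n]; rewrite /pprefix /=.
move=> /andP[/eqP-> H1] /andP[/eqP-> H2]. by rewrite eqxx (prefix_trans H1 H2).
Qed.

Lemma pprefix_size (D : ssdata) (a b : Defs.fpath D) :
  pprefix D a b -> size a.2 <= size b.2.
Proof. by move=> /andP[_ /prefixP[l ->]]; rewrite size_cat leq_addr. Qed.

Lemma pprefix_anti (D : ssdata) (a b : Defs.fpath D) :
  pprefix D a b -> pprefix D b a -> a = b.
Proof.
case: a b => [x l] [y m]; rewrite /pprefix /= => /andP[/eqP -> /prefixP[l1 ->]] /andP[_ /prefixP[l2]].
move=> /(congr1 size) /eqP. rewrite !size_cat -addnA -{1}(addn0 (size l)).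
rewrite eqn_add2l eq_sym addn_eq0 size_eq0 => /andP[/eqP -> _]. by rewrite cats0.
Qed.

Lemma pprefix_common (D : ssdata) (a b c : Defs.fpath D) :
  pprefix D a c -> pprefix D b c -> pprefix D a b || pprefix D b a.
Proof.
case: a b c => [x l] [y m] [z n]; rewrite /pprefix /= !prefixE.
move=> /andP[/eqP -> /eqP H1] /andP[/eqP -> /eqP H2]. rewrite eqxx /=.
case: (leqP (size l) (size m)) => H.
  by rewrite -{1}H2 take_takel // H1 eqxx.
apply/orP; right. by rewrite -{1}H1 take_takel ?H2 // ltnW.
Qed.

Lemma pprefix_eqsize (D : ssdata) (a b : Defs.fpath D) :
  pprefix D a b -> size b.2 <= size a.2 -> a = b.
Proof.
case: a b => [x l] [y m]; rewrite /pprefix /= => /andP[/eqP -> /prefixP[l1 ->]].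
rewrite size_cat -{2}(addn0 (size l)) leq_add2l leqn0 size_eq0 => /eqP ->.
by rewrite cats0.
Qed.

Lemma idem_ee (D : ssdata) : graph_action D -> one_cocycle D ->
  forall a, is_path D a -> idem D (ee a).
Proof.
move=> Ha Hc a Pa. split; last by rewrite Smul_ee // pprefix_refl.
split=> //; split=> //. by case: Ha => [[-> _ _ _] _].
Qed.

Lemma idem_char (D : ssdata) (e : Sraw D) :
  idem D e -> e = None \/ exists a, is_path D a /\ e = ee a.
Proof.
case: e => [[[al g] be]|]; last by left.
move=> [[Pa [Pb _]] H]; right. move: H; rewrite /Smul.
case: ifP => Hab.
  case=> H1 H2.
  have E : al = be.
    apply: pprefix_eqsize => //.
    move: H2 => /(congr1 (fun p : Defs.fpath D => size p.2)).
    rewrite /pcat /act_path /prest /= size_cat size_act_seq size_drop => /eqP.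
    rewrite -{3}(addn0 (size be.2)) eqn_add2l subn_eq0. by [].
  subst be. move: H1; rewrite /phi_path /prest /= drop_size /= => /g_idem ->.
  by exists al.
case: ifP => Hba //.
case=> H1 H2.
have E : be = al.
  apply: pprefix_eqsize => //.
  move: H1 => /(congr1 (fun p : Defs.fpath D => size p.2)).
  rewrite /pcat /act_path /prest /= size_cat size_act_seq size_drop => /eqP.
  rewrite -{3}(addn0 (size al.2)) eqn_add2l subn_eq0. by [].
subst be. move: H2; rewrite /phi_path /prest /= drop_size /= => /g_idem ->.
by exists al.
Qed.

Lemma Sle_ee (D : ssdata) : graph_action D -> one_cocycle D ->
  forall a b : Defs.fpath D, Sle D (ee a) (ee b) <-> pprefix D b a.
Proof.
move=> Ha Hc a b; rewrite /Sle Smul_ee //. split; last by move=> ->.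
case: ifP => // Hn. case: ifP => // _ [E]. by move: Hn; rewrite E pprefix_refl.
Qed.

Lemma Smul_ee_None (D : ssdata) : graph_action D -> one_cocycle D ->
  forall a b : Defs.fpath D, Smul D (ee a) (ee b) <> None ->
   pprefix D b a || pprefix D a b.
Proof.
move=> Ha Hc a b; rewrite Smul_ee //. by case: ifP => //; case: ifP.
Qed.

Lemma Smul_ee_some (D : ssdata) : graph_action D -> one_cocycle D ->
  forall a b : Defs.fpath D, pprefix D b a || pprefix D a b ->
   Smul D (ee a) (ee b) <> None.
Proof.
move=> Ha Hc a b; rewrite Smul_ee //. case: ifP => //; case: ifP => // _ _ H.
Qed.

Lemma chain_mid (D : ssdata) (a c : Ed D) l1 l2 :
  chain D (a :: l1 ++ c :: l2) -> src D (last a l1) = rng D c.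
Proof.
elim: l1 a => [|b l1 IH] a /=; first by move=> /andP[/eqP -> _].
by move=> /andP[_ H]; apply: IH.
Qed.

Lemma is_path_mid (D : ssdata) x l1 c l2 :
  is_path D (x, l1 ++ c :: l2) -> rng D c = psrc D (x, l1).
Proof.
case: l1 => [|a l1] /=; first by move=> /andP[/eqP -> _].
by move=> /andP[_ H]; rewrite -(chain_mid H).
Qed.

Lemma chain_rcons (D : ssdata) (a c : Ed D) l :
  chain D (a :: l) -> src D (last a l) = rng D c -> chain D (rcons (a :: l) c).
Proof.
elim: l a => [|b l IH] a /=; first by move=> _ ->; rewrite eqxx.
move=> /andP[H1 H2] H3. rewrite H1 /=. exact: IH.
Qed.

Lemma is_path_rcons (D : ssdata) x l c :
  is_path D (x, l) -> rng D c = psrc D (x, l) -> is_path D (x, rcons l c).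
Proof.
case: l => [|a l]; rewrite /is_path /=; first by move=> _ ->; rewrite eqxx.
move=> /andP[H1 H2] H3. rewrite H1 /=. exact: chain_rcons.
Qed.

Lemma pprefix_rcons (D : ssdata) x l c : pprefix D (x, l) (x, rcons l c).
Proof. by rewrite /pprefix eqxx prefix_rcons. Qed.


Definition unb (D : ssdata) (xi : Sraw D -> Prop) :=
  forall a, xi (ee a) -> exists b, xi (ee b) /\ size a.2 < size b.2.

Lemma F1 (D : ssdata) xi e : is_filter D xi -> xi e ->
  exists a, is_path D a /\ e = ee a.
Proof.
move=> [Hi _ Hn _ _] He. case: (idem_char (Hi _ He)) => // E.
by move: He; rewrite E.
Qed.

Lemma F2 (D : ssdata) xi a b : graph_action D -> one_cocycle D ->
  is_filter D xi -> xi (ee a) -> xi (ee b) -> pprefix D a b || pprefix D b a.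
Proof.
move=> Ha Hc [_ _ Hn Hm _] H1 H2. rewrite orbC. apply: Smul_ee_None => // E.
by apply: Hn; rewrite -E; apply: Hm.
Qed.

Lemma F3 (D : ssdata) xi a b : graph_action D -> one_cocycle D ->
  is_filter D xi -> xi (ee a) -> is_path D b -> pprefix D b a -> xi (ee b).
Proof.
move=> Ha Hc [_ _ _ _ Hu] H Pb Hp. apply: (Hu _ _ H); first exact: idem_ee.
by apply/Sle_ee.
Qed.

Lemma unb_long (D : ssdata) xi : is_filter D xi -> unb xi ->
  forall n, exists a, xi (ee a) /\ n <= size a.2.
Proof.
move=> Hf Hu; elim=> [|n [a [Ha Hn]]].
  case: (Hf) => _ [e He] _ _ _. have [a [_ E]] := F1 Hf He. subst e.
  by exists a.
have [b [Hb Hs]] := Hu _ Ha. exists b; split=> //. exact: leq_ltn_trans Hs.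
Qed.

Lemma unb_ultra (D : ssdata) xi : graph_action D -> one_cocycle D ->
  is_filter D xi -> unb xi -> is_ultrafilter D xi.
Proof.
move=> Ha Hc Hf Hu; split=> // eta Heta Hsub e He.
have [b [Pb E]] := F1 Heta He. subst e.
have [a [Hxa Hs]] := unb_long Hf Hu (size b.2).+1.
have := F2 Ha Hc Heta He (Hsub _ Hxa). case/orP => Hp; last first.
  by have := pprefix_size Hp; rewrite leqNgt Hs.
exact: F3 Hf Hxa Pb Hp.
Qed.

Lemma edge_exists (D : ssdata) : row_finite_no_sources D ->
  forall x, exists c, rng D c = x.
Proof.
move=> Hr x. have [[|c l] [Hl H]] := Hr x => //. exists c. apply/eqP.
by rewrite H mem_head.
Qed.

Lemma ultra_unb (D : ssdata) xi : row_finite_no_sources D -> graph_action D ->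
  one_cocycle D -> is_ultrafilter D xi -> unb xi.
Proof.
move=> Hr Ha Hc [Hf Hmax] a Hxa.
apply: NNPP => Hno.
have Pa : is_path D a by case: Hf => Hi _ _ _ _; case: (Hi _ Hxa) => [[]].
have [c Hcr] := edge_exists Hr (psrc D a).
case: a Hxa Hno Pa Hcr => [x l] Hxa Hno Pa Hcr.
set a' := (x, rcons l c).
have Pa' : is_path D a' by apply: is_path_rcons.
have Paa' : pprefix D (x, l) a' by apply: pprefix_rcons.
pose eta := fun e => idem D e /\ Sle D (ee a') e.
have Hnone : forall g, ~ Sle D (ee g) None by [].
have eta_char : forall e, eta e -> exists g, is_path D g /\ e = ee g /\ pprefix D g a'.
  move=> e [He Hs]. case: (idem_char He) => [E|[g [Pg E]]]; subst e => //.
  by exists g; split=> //; split=> //; apply/(Sle_ee Ha Hc).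
have Heta : is_filter D eta.
  split.
  - by move=> e [].
  - exists (ee a'); split; first exact: idem_ee.
    by apply/(Sle_ee Ha Hc); apply: pprefix_refl.
  - by move=> [_ H].
  - move=> e f /eta_char [g1 [P1 [-> H1]]] /eta_char [g2 [P2 [-> H2]]].
    rewrite Smul_ee //.
    case E1: (pprefix D g2 g1).
      by split; [exact: idem_ee | apply/(Sle_ee Ha Hc)].
    case E2: (pprefix D g1 g2).
      by split; [exact: idem_ee | apply/(Sle_ee Ha Hc)].
    by have := pprefix_common H1 H2; rewrite E1 E2.
  - move=> e f /eta_char [g1 [P1 [-> H1]]] Hf' Hs.
    case: (idem_char Hf') => [E|[g2 [P2 E]]]; subst f => //.
    split=> //. apply/(Sle_ee Ha Hc). apply: (pprefix_trans _ H1).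
    by apply/(Sle_ee Ha Hc).
have Hsub : forall e, xi e -> eta e.
  move=> e He. have [g [Pg E]] := F1 Hf He; subst e.
  split; first exact: idem_ee.
  apply/(Sle_ee Ha Hc).
  case/orP: (F2 Ha Hc Hf He Hxa) => Hp; first exact: pprefix_trans Hp Paa'.
  case: (leqP (size g.2) (size l)) => Hs.
    by rewrite -(pprefix_eqsize Hp Hs).
  by case: Hno; exists g.
have Hx : xi (ee a').
  apply: (Hmax eta Heta Hsub).
  by split; [exact: idem_ee | apply/(Sle_ee Ha Hc); apply: pprefix_refl]. apply: Hno. exists a'; split=> //. by rewrite /= size_rcons.
Qed.

Lemma In_mem (T : eqType) (x : T) s : List.In x s -> x \in s.
Proof.
elim: s => [|y s IH] //= [->|H]; first by rewrite mem_head.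
by rewrite in_cons IH ?orbT.
Qed.

Lemma mem_In (T : eqType) (x : T) s : x \in s -> List.In x s.
Proof.
elim: s => [|y s IH] //=; rewrite in_cons => /orP [/eqP ->|H]; first by left.
by right; apply: IH.
Qed.

Lemma In_map' (T U : Type) (f : T -> U) s x : List.In x s -> List.In (f x) (map f s).
Proof. elim: s => [|y s IH] //= [->|H]; [by left | by right; apply: IH]. Qed.

Lemma In_map_inv (T U : Type) (f : T -> U) s z : List.In z (map f s) ->
  exists x, f x = z /\ List.In x s.
Proof.
elim: s => [|y s IH] //= [<-|H]; first by exists y; split=> //; left.
by have [x [E Hx]] := IH H; exists x; split=> //; right.
Qed.

Lemma In_sumn (T : Type) (f : T -> nat) s x : List.In x s -> f x <= sumn (map f s).
Proof.
elim: s => [|y s IH] //= [->|H]; first exact: leq_addr.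
apply: leq_trans (IH H) _. exact: leq_addl.
Qed.

Lemma tight_unb (D : ssdata) xi : row_finite_no_sources D -> graph_action D ->
  one_cocycle D -> is_tight D xi -> unb xi.
Proof.
move=> Hr Ha Hc [Hf Ht] a Hxa.
have Pa : is_path D a by case: Hf => Hi _ _ _ _; case: (Hi _ Hxa) => [[]].
case: a Hxa Pa => [x l] Hxa Pa.
have [L [HL HLr]] := Hr (psrc D (x, l)).
pose Z := map (fun c => ee (x, rcons l c)) L.
have HinZ : forall c, List.In c L -> List.In (ee (x, rcons l c)) Z.
  by move=> c Hc'; apply: (In_map' (fun c => ee (x, rcons l c))).
have Hcov : is_cover D [:: ee (x, l)] [::] Z.
  split.
  - move=> z Hz. have [c [Ez Hc0]] := In_map_inv Hz. subst z. have Hc' := In_mem Hc0.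
    have Hrc : rng D c = psrc D (x, l) by apply/eqP; rewrite HLr.
    split; first by apply: idem_ee => //; apply: is_path_rcons.
    split=> // x0 /= [<-|//]. apply/(Sle_ee Ha Hc). exact: pprefix_rcons.
  - move=> e [Hie [HX _]] Hne.
    case: (idem_char Hie) => [E|[b [Pb E]]]; first by [].
    subst e. have := HX _ (or_introl erefl). move/(Sle_ee Ha Hc).
    case: b Pb {Hne Hie HX} => [y m] Pb.
    rewrite /pprefix /= => /andP[/eqP Ey /prefixP [r Em]]. subst y m.
    case: r Pb => [|c r] Pb.
      have [c Hc0] : exists c, List.In c L.
        by move: HL; case: (L) => [|c L'] // _; exists c; left.
      exists (ee (x, rcons l c)); split; first exact: HinZ.
      apply: Smul_ee_some => //. by rewrite cats0 pprefix_rcons orbT.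
    have Hrc := is_path_mid Pb.
    have Hcl : List.In c L.
      have : c \in L by rewrite -HLr Hrc.
      by move/mem_In.
    exists (ee (x, rcons l c)); split; first exact: HinZ.
    apply: Smul_ee_some => //. apply/orP; left.
    by rewrite /pprefix eqxx /= -cat_rcons prefix_prefix.
have [z [Hz Hxz]] := Ht [:: ee (x, l)] [::] (fun x0 H => match H with or_introl E => eq_ind _ xi Hxa _ E | or_intror F => False_ind _ F end) (fun y H => False_ind _ H) Z Hcov.
have [c [E _]] := In_map_inv Hz. subst z.
exists (x, rcons l c); split=> //. by rewrite /= size_rcons.
Qed.

Definition msz (D : ssdata) (e : Sraw D) : nat :=
  if e is Some (al, _, _) then size al.2 else 0.

Lemma unb_tight (D : ssdata) xi : graph_action D -> one_cocycle D ->
  is_filter D xi -> unb xi -> is_tight D xi.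
Proof.
move=> Ha Hc Hf Hu; split=> // X Y HX HY Z [HZ1 HZ2].
pose N := sumn (map (@msz D) (X ++ Y ++ Z)).
have HN : forall w, List.In w (X ++ Y ++ Z) -> msz w <= N by move=> w; apply: In_sumn.
have [d [Hd Hs]] := unb_long Hf Hu N.+1.
have Pd : is_path D d by case: Hf => Hi _ _ _ _; case: (Hi _ Hd) => [[]].
have Hsmall : forall g w, List.In w (X ++ Y ++ Z) -> w = ee g -> ~~ pprefix D d g.
  move=> g w Hw Ew; apply/negP => Hp. have := HN _ Hw. rewrite Ew /= => H.
  have := leq_trans (pprefix_size Hp) H. by rewrite leqNgt Hs.
have HE : EXY D X Y (ee d).
  split; first by case: Hf => Hi _ _ _ _; apply: Hi.
  split.
  - move=> w Hw. have [g [Pg Eg]] := F1 Hf (HX _ Hw).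
    rewrite Eg in Hw *. apply/(Sle_ee Ha Hc). have := F2 Ha Hc Hf Hd (HX _ Hw).
    have := Hsmall g (ee g) (List.in_or_app _ _ _ (or_introl Hw)) erefl.
    by case: (pprefix D d g).
  - move=> w Hw. have [Hiw Hnw] := HY _ Hw.
    case: (idem_char Hiw) => [->|[g [Pg Eg]]] //. subst w.
    rewrite Smul_ee //. case E1: (pprefix D g d).
      by case: Hnw; apply: F3 Ha Hc Hf Hd Pg E1.
    have := Hsmall g (ee g) (List.in_or_app _ _ _ (or_intror (List.in_or_app _ _ _ (or_introl Hw)))) erefl.
    by case: (pprefix D d g).
have [z [Hz Hdz]] := HZ2 _ HE ltac:(by []).
exists z; split=> //.
have [Hiz _] := HZ1 _ Hz.
case: (idem_char Hiz) => [E|[g [Pg Eg]]]; first by rewrite E in Hdz.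
subst z. have := Smul_ee_None Ha Hc Hdz.
have := Hsmall g (ee g) (List.in_or_app _ _ _ (or_intror (List.in_or_app _ _ _ (or_intror Hz)))) erefl.
case: (pprefix D d g) => //= _ Hp. rewrite orbF in Hp. exact: F3 Ha Hc Hf Hd Pg Hp.
Qed.

Unset Implicit Arguments.

Theorem proposition4p1 (D : ssdata) :
  row_finite_no_sources D ->
  graph_action D ->
  one_cocycle D ->
  cocycle_fixes_vertices D ->
  forall xi : Sraw D -> Prop, is_tight D xi <-> is_ultrafilter D xi.
Proof.
move=> Hr Ha Hc _ xi; split => H.
  apply: unb_ultra => //; first by case: H.
  exact: tight_unb.
apply: unb_tight => //; first by case: H.
exact: ultra_unb.
Qed.
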